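(* Let $H$ be a separable Hilbert space, $(\Omega,\mathcal{A},\mu)$ a measure space, and $V:H\to L^2_\mu(\Omega)$ an invertible bounded linear operator. Let $G:=V^{\mathsf{T}}V$ and let $d$ be the metric on $H$ given by $$d(x_1,x_2)^2:=\inf_{\gamma\in\Gamma(x_1,x_2)}\int_0^1\langle G\dot\gamma(s),\dot\gamma(s)\rangle_H\,\mathrm{d}s.$$ Let $\mathcal{F}:H\to\mathbb{R}$ be $\tilde\lambda$-convex on $H$ for some $\tilde\lambda\in\mathbb{R}$. Then $\mathcal{F}$ is geodesically $\lambda$-convex with respect to $d$, where $\lambda:=\tilde\lambda\|V\|^{-2}$ if $\tilde\lambda>0$ and $\lambda:=\tilde\lambda\|V^{-1}\|^2$ if $\tilde\lambda\le0$.
   Context: $V^{\mathsf{T}}$ is the Hilbert-space adjoint of $V$; $\|V\|$ and $\|V^{-1}\|$ are the operator norms in $L(H,L^2_\mu(\Omega))$ and $L(L^2_\mu(\Omega),H)$. $\Gamma(x_1,x_2)$ is the set of curves $\gamma\in C^1([0,1],H)$ with $\gamma(0)=x_1,\gamma(1)=x_2$. $\tilde\lambda$-convexity on $H$ means $\mathcal{F}((1-\theta)x_1+\theta x_2)\le(1-\theta)\mathcal{F}(x_1)+\theta\mathcal{F}(x_2)-\tilde\lambda\frac{\theta(1-\theta)}{2}\|x_1-x_2\|_H^2$ for all $x_1,x_2\in H$, $\theta\in[0,1]$. Geodesic $\lambda$-convexity w.r.t. $d$ means: for every constant-speed geodesic $\gamma:[0,1]\to H$ of $(H,d)$ and every $\theta\in[0,1]$,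 $\mathcal{F}(\gamma(\theta))\le(1-\theta)\mathcal{F}(\gamma(0))+\theta\mathcal{F}(\gamma(1))-\lambda\frac{\theta(1-\theta)}{2}d(\gamma(0),\gamma(1))^2$. *)

(* Defs.v *)
From HB Require Import structures.
From mathcomp Require Import all_boot all_order all_algebra.
From mathcomp Require Import all_classical all_reals all_analysis.
Set Implicit Arguments. Unset Strict Implicit. Unset Printing Implicit Defensive.
Import Order.TTheory GRing.Theory Num.Def Num.Theory.
Import numFieldNormedType.Exports.
Local Open Scope classical_set_scope.
Local Open Scope ring_scope.

(* elements of L^2: measurable real functions with finite L^2 norm
   (representatives; a.e.-equality handled explicitly) *)
Definition two_ge1 {R : realType} : ((1 : \bar R) <= 2%:E)%E := lee1n 2.

Definition L2 d (Omega : measurableType d) (R : realType)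
  (mu : {measure set Omega -> \bar R}) := LfunType mu (@two_ge1 R).

Definition L2norm d (Omega : measurableType d) (R : realType)
  (mu : {measure set Omega -> \bar R}) (f : L2 mu) : R :=
  fine ('N[mu]_2%:E[EFin \o (f : Omega -> R)]).

Definition L2inner d (Omega : measurableType d) (R : realType)
  (mu : {measure set Omega -> \bar R}) (f g : L2 mu) : R :=
  fine (\int[mu]_x ((f : Omega -> R) x * (g : Omega -> R) x)%:E).

Definition opnorm (R : realType) (U W : Type) (nU : U -> R) (nW : W -> R)
  (T : U -> W) : R := sup [set nW (T u) | u in [set u | nU u <= 1]].

Definition I01 (R : realType) : set R := [set t | 0 <= t <= 1].

Definition C1_curve (R : realType) (H : normedModType R)
  (gamma gamma' : R -> H) : Prop :=
  {within @I01 R, continuous gamma'} /\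
  forall s, @I01 R s ->
    (fun t => (t - s)^-1 *: (gamma t - gamma s)) @ within (@I01 R) s^' --> gamma' s.

Definition energy (R : realType) (H : normedModType R) (ip : H -> H -> R)
  (G : H -> H) (gamma' : R -> H) : \bar R :=
  (\int[lebesgue_measure]_(s in @I01 R) (ip (G (gamma' s)) (gamma' s))%:E)%E.

Definition Gdist (R : realType) (H : normedModType R) (ip : H -> H -> R)
  (G : H -> H) (x1 x2 : H) : R :=
  Num.sqrt (fine (ereal_inf [set e | exists gamma gamma' : R -> H,
     [/\ C1_curve gamma gamma', gamma 0 = x1, gamma 1 = x2 &
         e = energy ip G gamma']])).

Definition const_speed_geodesic (R : realType) (H : Type) (dist : H -> H -> R)
  (gamma : R -> H) : Prop :=
  forall s t, @I01 R s -> @I01 R t ->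
    dist (gamma s) (gamma t) = `|t - s| * dist (gamma 0) (gamma 1).

Definition lambda_convex (R : realType) (H : normedModType R) (F : H -> R)
  (lam : R) : Prop :=
  forall x1 x2 : H, forall th : R, 0 <= th <= 1 ->
    F ((1 - th) *: x1 + th *: x2) <=
      (1 - th) * F x1 + th * F x2 - lam * (th * (1 - th) / 2) * `|x1 - x2| ^+ 2.

Definition geod_lambda_convex (R : realType) (H : Type) (dist : H -> H -> R)
  (F : H -> R) (lam : R) : Prop :=
  forall gamma : R -> H, const_speed_geodesic dist gamma ->
  forall th : R, 0 <= th <= 1 ->
    F (gamma th) <= (1 - th) * F (gamma 0) + th * F (gamma 1)
                     - lam * (th * (1 - th) / 2) * dist (gamma 0) (gamma 1) ^+ 2.

Definition is_inner_product (R : realType) (H : normedModType R)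
  (ip : H -> H -> R) : Prop :=
  [/\ forall x y, ip x y = ip y x,
      forall (a : R) x y z, ip (a *: x + y) z = a * ip x z + ip y z &
      forall x, ip x x = `|x| ^+ 2].

Definition separable (T : topologicalType) : Prop :=
  exists D : set T, countable D /\ closure D = setT.

(* Main.v *)
Require Import Defs.
From HB Require Import structures.
From mathcomp Require Import all_boot all_order all_algebra.
From mathcomp Require Import all_classical all_reals all_analysis.
Import Order.TTheory GRing.Theory Num.Def Num.Theory.
Import numFieldNormedType.Exports.
Local Open Scope classical_set_scope.
Local Open Scope ring_scope.
From mathcomp Require Import ring lra.

Definition symbil (R : realType) (H : lmodType R) (b : H -> H -> R) :=
  (forall x y, b x y = b y x) /\ (forall a x y z, b (a *: x + y) z = a * b x z + b y z).

Arguments symbil {R H}.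
Section bil.
Variables (R : realType) (H : lmodType R) (b : H -> H -> R).
Hypothesis hb : symbil b.

Lemma b0l z : b 0 z = 0.
Proof.
case: hb => _ hl; have := hl 1 0 0 z; rewrite scale1r addr0 mul1r => h; lra.
Qed.
Lemma bDl x y z : b (x + y) z = b x z + b y z.
Proof. by case: hb => _ hl; rewrite -{1}(scale1r x) hl mul1r. Qed.
Lemma bZl a x z : b (a *: x) z = a * b x z.
Proof. by case: hb => _ hl; rewrite -(addr0 (a *: x)) hl b0l addr0. Qed.
Lemma bNl x z : b (- x) z = - b x z.
Proof. by rewrite -scaleN1r bZl mulN1r. Qed.
Lemma bBl x y z : b (x - y) z = b x z - b y z.
Proof. by rewrite bDl bNl. Qed.
Lemma bDr x y z : b z (x + y) = b z x + b z y.
Proof. by case: hb => hs _; rewrite !(hs z) bDl. Qed.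
Lemma bZr a x z : b z (a *: x) = a * b z x.
Proof. by case: hb => hs _; rewrite !(hs z) bZl. Qed.
Lemma bNr x z : b z (- x) = - b z x.
Proof. by case: hb => hs _; rewrite !(hs z) bNl. Qed.
Lemma bBr x y z : b z (x - y) = b z x - b z y.
Proof. by rewrite bDr bNr. Qed.
Lemma b0r z : b z 0 = 0.
Proof. by case: hb => hs _; rewrite hs b0l. Qed.

Lemma bsq2 s t x y : b (s *: x + t *: y) (s *: x + t *: y) =
  s ^+ 2 * b x x + 2 * s * t * b x y + t ^+ 2 * b y y.
Proof.
case: hb => hs _.
rewrite !bDl !bDr !bZl !bZr (hs y x); ring.
Qed.

Lemma quad_cs (A B C : R) : 0 <= C -> (forall t, 0 <= A + 2 * t * B + t ^+ 2 * C) ->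
  B ^+ 2 <= A * C.
Proof.
move=> C0 h; have [C0'|Cp] := eqVneq C 0.
  subst C; have [B0|Bn] := eqVneq B 0; first by subst B; rewrite expr2 !mulr0.
  have := h (- (A + 1) / (2 * B)); rewrite expr2 mulr0 addr0.
  have -> : 2 * (- (A + 1) / (2 * B)) * B = - (A + 1).
    by field; rewrite Bn.
  by move=> /= hh; exfalso; lra.
have Cpos : 0 < C by rewrite lt_def Cp C0.
have := h (- B / C).
have -> : A + 2 * (- B / C) * B + (- B / C) ^+ 2 * C = A - B ^+ 2 / C.
  by field; rewrite Cp.
rewrite subr_ge0 ler_pdivrMr //.
Qed.

Lemma b_cs : (forall x, 0 <= b x x) -> forall x y, b x y ^+ 2 <= b x x * b y y.
Proof.
move=> hp x y; apply: quad_cs => // t.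
have := hp (1 *: x + t *: y); rewrite bsq2 expr1n mul1r mulr1.
by rewrite [_ * t * _]mulrAC.
Qed.
End bil.
Lemma lip_cvg (R : realType) (H : normedModType R) (h : H -> R) (M : R)
  (T : Type) (F : set_system T) (FF : Filter F) (u : T -> H) (x : H) :
  (forall a b, `|h a - h b| <= M * `|a - b|) -> u @ F --> x -> (h \o u) @ F --> h x.
Proof.
move=> hl ux; apply/cvgrPdist_le => e e0.
have M1 : 0 < `|M| + 1 by rewrite ltr_wpDl.
have := cvgr_dist_le _ _ ux _ (divr_gt0 e0 M1) => /(_ FF); apply: filterS => t ht /=.
apply: (le_trans (hl _ _)); apply: (le_trans (y := (`|M| + 1) * `|x - u t|)).
  apply: ler_wpM2r => //; apply: (le_trans (ler_norm M)); lra.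
by rewrite -ler_pdivlMl // mulrC.
Qed.

Lemma lip_cont (R : realType) (H : normedModType R) (h : H -> R) (M : R) :
  (forall a b, `|h a - h b| <= M * `|a - b|) -> continuous h.
Proof. by move=> hl x; exact: (@lip_cvg R H h M H (nbhs x) _ id x hl cvg_id). Qed.
Lemma dquot_interior (R : realType) (W : normedModType R) (Q : R -> W) (s : R) (L : W) :
  0 < s < 1 -> Q @ within (@I01 R) (s^') --> L -> (fun h => Q (h + s)) @ 0^' --> L.
Proof.
move=> /andP[s0 s1] hQ P /hQ.
rewrite /= /within /= !near_simpl => hP.
have hI : \forall t \near s, t \in `]0, 1[ by apply: near_in_itvoo; rewrite in_itv /= s0 s1.
have H2 : \forall t \near s, t != s -> P (Q t).
  apply: filterS2 hI hP => t; rewrite in_itv /= => /andP[t0 t1] h ts.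
  by apply: h => //; rewrite /I01 /= !ltW.
move/nbhs0P: H2 => H2.
rewrite /dnbhs /within /=. 
apply: filterS H2 => e h e0; rewrite addrC; apply: h.
by rewrite -subr_eq0 addrC addKr.
Qed.
Lemma C1_cont (R : realType) (H : normedModType R) (g g' : R -> H) (s : R) :
  C1_curve g g' -> I01 s -> g @ within (@I01 R) (s^') --> g s.
Proof.
move=> [_ hd] Is; have hQ := hd s Is.
have FF : Filter (within (@I01 R) (s^')) by apply: within_filter; apply: within_filter; apply: nbhs_filter.
have hs : (fun t : R => t - s) @ within (@I01 R) (s^') --> (0 : R).
  rewrite -(subrr s); apply: cvgB; last exact: cvg_cst.
  exact: cvg_trans (cvg_within _) (cvg_within _).
have := cvgD (cvg_cst (g s)) (cvgZ hs hQ).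
rewrite scale0r addr0 => /(_ FF FF FF) H1; apply: (cvg_trans _ H1); apply: near_eq_cvg.
rewrite /within /= /dnbhs /within /=; apply: (@nearW _ (nbhs s)) => t ts _ /=.
by rewrite !fctE scalerA divff ?subr_eq0 // scale1r addrC subrK.
Qed.
Lemma I01E (R : realType) : @I01 R = `[0, 1]%classic.
Proof. by apply/seteqP; split => x /=; rewrite in_itv. Qed.

Lemma right0_I01 (R : realType) (T : topologicalType) (f : R -> T) (l : T) :
  f @ within (@I01 R) ((0:R)^') --> l -> f @ (0:R)^'+ --> l.
Proof.
move=> hf; apply: cvg_trans hf => P /=.
rewrite /within /= !near_simpl /dnbhs /within /= => hP.
have hI : \forall t \near (0:R), t \in `]-oo, 1[ by apply: near_in_itvNyo; rewrite in_itv /=.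
apply: filterS2 hI hP => t; rewrite in_itv /= => t1 h t0.
by apply: h; [rewrite gt_eqF | rewrite /I01 /= ltW // ltW].
Qed.

Lemma left1_I01 (R : realType) (T : topologicalType) (f : R -> T) (l : T) :
  f @ within (@I01 R) ((1:R)^') --> l -> f @ (1:R)^'- --> l.
Proof.
move=> hf; apply: cvg_trans hf => P /=.
rewrite /within /= !near_simpl /dnbhs /within /= => hP.
have hI : \forall t \near (1:R), t \in `]0, +oo[.
 by apply: near_in_itvoy; rewrite in_itv /= ?andbT ltr01.
apply: filterS2 hI hP => t; rewrite in_itv /= andbT => t1 h t0.
by apply: h; [rewrite lt_eqF | rewrite /I01 /= ltW // ltW].
Qed.

Lemma I01_0 (R : realType) : @I01 R 0.
Proof. by rewrite /I01 /= lexx ler01. Qed.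
Lemma I01_1 (R : realType) : @I01 R 1.
Proof. by rewrite /I01 /= lexx ler01. Qed.

Lemma energy_lb (R : realType) (H : normedModType R) (q : H -> H -> R) (g g' : R -> H) :
  symbil q -> (forall x, 0 <= q x x) ->
  (forall x, continuous (q x)) -> continuous (fun z => q z z) ->
  C1_curve g g' ->
  ((q (g 1 - g 0) (g 1 - g 0))%:E <=
    \int[lebesgue_measure]_(s in @I01 R) (q (g' s) (g' s))%:E)%E.
Proof.
move=> hq hpos cq cqq hC; set e := g 1 - g 0.
have [cg' hd] := hC.
set f1 := fun s => q (g' s) (g' s).
set f2 := fun s => q e (g' s).
set F := fun s => q e (g s).
have cf1 : {within `[0, 1], continuous f1}.
  rewrite -I01E; apply: (@within_continuous_comp _ _ _ _ _ (fun z => q z z)) => //.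
have cf2 : {within `[0, 1], continuous f2}.
  rewrite -I01E; apply: (@within_continuous_comp _ _ _ _ _ (q e)) => //.
have key : forall s, 0 < s < 1 ->
    (fun h => h^-1 *: (F (h + s) - F s)) @ (0:R)^' --> f2 s.
  move=> s s01.
  have Is : I01 s by case/andP: s01 => ? ?; rewrite /I01 /= !ltW.
  have := @dquot_interior R H _ s _ s01 (hd s Is).
  move=> /(continuous_cvg _ (cq e (g' s))) => hc.
  apply: cvg_trans hc; apply: near_eq_cvg; apply: nearW => h /=.
  by rewrite /F bZr // bBr // addrK.
have hF0 : F x @[x --> (0:R)^'+] --> F 0.
  apply: right0_I01.
  have := @C1_cont R H g g' 0 hC (I01_0 R).
  by move=> /(continuous_cvg _ (cq e (g 0))).
have hF1 : F x @[x --> (1:R)^'-] --> F 1.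
  apply: left1_I01.
  have := @C1_cont R H g g' 1 hC (I01_1 R).
  by move=> /(continuous_cvg _ (cq e (g 1))).
have hLR : derivable_oo_LRcontinuous F 0 1.
  split => // s; rewrite in_itv /= => s01.
  rewrite /derivable /=; apply/cvg_ex; exists (f2 s).
  apply: cvg_trans (key s s01); apply: near_eq_cvg; apply: nearW => h /=.
  by rewrite [h *: 1]mulr1.
have hder : {in `]0, 1[, F^`()%classic =1 f2}.
  move=> s; rewrite in_itv /= => s01.
  by rewrite /derive1; apply: cvg_lim => //; exact: key.
have ftc := continuous_FTC2 ltr01 cf2 hLR hder.
have m01 : measurable (`[0, 1]%classic : set R) by exact: measurable_itv.
have cint : forall f : R -> R, {within `[0, 1], continuous f} ->
    lebesgue_measure.-integrable `[0, 1] (EFin \o f).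
  by move=> f cf; apply: continuous_compact_integrable => //; exact: segment_compact.
have c2 : {within `[0, 1], continuous (fun s => 2 * f2 s)}.
  apply: (@within_continuous_comp _ _ _ _ f2 (fun y => 2 * y)) => // y _.
  by apply: cvgM; [exact: cvg_cst | exact: cvg_id].
have cc : {within `[0, 1], continuous (fun _ : R => q e e)}.
  by apply: continuous_subspaceT => y; exact: cvg_cst.
have c3 : {within `[0, 1], continuous (fun s => 2 * f2 s - q e e)}.
  apply: (@within_continuous_comp _ _ _ _ f2 (fun y => 2 * y - q e e)) => // y _.
  apply: cvgB; last exact: cvg_cst.
  by apply: cvgM; [exact: cvg_cst | exact: cvg_id].
have If2 : Rintegral lebesgue_measure `[0, 1] f2 = q e e.
  rewrite /Rintegral ftc /= /F -bBr //.
have pw : forall s, 2 * f2 s - q e e <= f1 s.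
  move=> s; have := hpos (1 *: g' s + (-1) *: e); rewrite bsq2 //.
  case: hq => hs _; rewrite /f1 /f2 (hs e); lra.
have fin1 : (\int[lebesgue_measure]_(x in `[0%R, 1%R]) (f1 x)%:E)%E \is a fin_num.
  by apply: integrable_fin_num => //; exact: cint.
rewrite I01E -(fineK fin1) lee_fin.
have LE : Rintegral lebesgue_measure `[0, 1] (fun s => 2 * f2 s - q e e) <=
    Rintegral lebesgue_measure `[0, 1] f1.
  by apply: le_Rintegral => //; try exact: cint; move=> s _; exact: pw.
apply: (le_trans _ LE).
rewrite RintegralB //; try exact: cint.
rewrite RintegralZl //; last exact: cint.
rewrite If2 Rintegral_cst //.
have -> : fine (lebesgue_measure (`[0, 1]%classic : set R)) = 1.
  by rewrite (@lebesgue_measure_itv R `[0, 1]) /= lte_fin ltr01 /= subr0.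
lra.
Qed.

Lemma line_C1 (R : realType) (H : normedModType R) (x1 e : H) :
  C1_curve (fun s : R => x1 + s *: e) (fun=> e).
Proof.
split.
  by apply: continuous_subspaceT => y; exact: cvg_cst.
move=> s _.
have FF : Filter (within (@I01 R) (s^')) by apply: within_filter; apply: within_filter; apply: nbhs_filter.
apply: (cvg_trans _ (@cvg_cst _ e _ _ FF)); apply: near_eq_cvg.
rewrite /within /= /dnbhs /within /=; apply: (@nearW _ (nbhs s)) => t ts _ /=.
by rewrite opprD addrACA subrr add0r -scalerBl scalerA mulVf ?subr_eq0 // ?scale1r.
Qed.

Lemma I01_measure (R : realType) : (lebesgue_measure (@I01 R) = 1%E).
Proof. by rewrite I01E (@lebesgue_measure_itv R `[0, 1]) /= lte_fin ltr01 /= oppr0 adde0. Qed.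

Lemma Gdist_eq (R : realType) (H : normedModType R) (ip : H -> H -> R) (G : H -> H)
  (x1 x2 : H) :
  symbil (fun x y => ip (G x) y) -> (forall x, 0 <= ip (G x) x) ->
  (forall x, continuous (ip (G x))) -> continuous (fun z => ip (G z) z) ->
  Gdist ip G x1 x2 = Num.sqrt (ip (G (x2 - x1)) (x2 - x1)).
Proof.
move=> hq hpos cq cqq; rewrite /Gdist; congr Num.sqrt.
set S := [set e | _].
suff -> : ereal_inf S = (ip (G (x2 - x1)) (x2 - x1))%:E by [].
apply/eqP; rewrite eq_le; apply/andP; split.
  apply: ereal_inf_lbound; exists (fun s => x1 + s *: (x2 - x1)), (fun=> x2 - x1).
  split; first exact: line_C1.
  - by rewrite scale0r addr0.
  - by rewrite scale1r addrC subrK.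
  rewrite /energy.
  have mI : measurable (@I01 R) by rewrite I01E; exact: measurable_itv.
  rewrite integral_cst //; set m := (X in (_ * X)%E).
  have -> : m = 1%E by exact: (I01_measure R).
  by rewrite mule1.
apply/ereal_infP => y [g [g' [hC g0 g1 ->]]].
have := @energy_lb R H (fun x y => ip (G x) y) g g' hq hpos cq cqq hC.
by rewrite g0 g1.
Qed.
Lemma L2inner_sq d (Omega : measurableType d) (R : realType)
  (mu : {measure set Omega -> \bar R}) (f : L2 mu) : L2inner f f = L2norm f ^+ 2.
Proof.
rewrite /L2inner /L2norm -powR_mulrn ?fine_ge0 ?Lnorm_ge0 //.
have h2 : (2:R) != 0 by [].
have := powR_Lnorm mu (EFin \o (f : Omega -> R)) h2.
rewrite -(finite_norm_fine f) poweR_EFin => /(congr1 fine) /= ->.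
congr fine; apply: eq_integral => x _ /=.
by rewrite /= powR_mulrn ?normr_ge0 // real_normK ?num_real.
Qed.

Lemma L2norm_ge0 d (Omega : measurableType d) (R : realType)
  (mu : {measure set Omega -> \bar R}) (f : L2 mu) : 0 <= L2norm f.
Proof. by rewrite /L2norm fine_ge0 // Lnorm_ge0. Qed.

Lemma L2normZ d (Omega : measurableType d) (R : realType)
  (mu : {measure set Omega -> \bar R}) (a : R) (f : L2 mu) :
  L2norm (a *: f) = `|a| * L2norm f.
Proof.
rewrite /L2norm; have := LnormZ f a => /(congr1 fine) /= ->.
by rewrite fineM // ge0_fin_numE ?Lnorm_ge0 //; exact: Lfunction_finite.
Qed.

Lemma L2normD d (Omega : measurableType d) (R : realType)
  (mu : {measure set Omega -> \bar R}) (f g : L2 mu) :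
  L2norm (f + g) <= L2norm f + L2norm g.
Proof. exact: ler_LnormD. Qed.

Lemma L2inner_sym d (Omega : measurableType d) (R : realType)
  (mu : {measure set Omega -> \bar R}) (f g : L2 mu) : L2inner f g = L2inner g f.
Proof. by rewrite /L2inner; congr fine; apply: eq_integral => x _; rewrite mulrC. Qed.
Lemma lin_id (R : comRingType) (M : lmodType R) (t : R) (x0 x1 xt : M) :
  t *: (x1 - xt) + (-(1 - t)) *: (xt - x0) = ((1 - t) *: x0 + t *: x1) - xt.
Proof.
rewrite scaleNr !scalerBr !scalerBl !scale1r.
rewrite ?opprB ?opprD ?opprK.
by rewrite addrCA subrKA addrA.
Qed.

Theorem mainTheorem4 (R : realType) (H : completeNormedModType R)
  (ip : H -> H -> R) (d : measure_display) (Omega : measurableType d)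
  (mu : {measure set Omega -> \bar R})
  (V : {linear H -> L2 mu}) (Vinv : {linear L2 mu -> H}) (VT : L2 mu -> H)
  (F : H -> R) (lamt : R) :
  is_inner_product ip ->
  separable H ->
  (* V is bounded *)
  (exists C : R, forall x, L2norm (V x) <= C * `|x|) ->
  (* V is invertible with bounded inverse Vinv (as a map into L^2 modulo a.e.) *)
  (forall f g : L2 mu, (f : Omega -> R) = g %[ae mu] -> Vinv f = Vinv g) ->
  (forall x, Vinv (V x) = x) ->
  (forall f : L2 mu, (V (Vinv f) : Omega -> R) = f %[ae mu]) ->
  (exists C : R, forall f, `|Vinv f| <= C * L2norm f) ->
  (* VT is the Hilbert-space adjoint of V *)
  (forall (f : L2 mu) (x : H), ip (VT f) x = L2inner f (V x)) ->
  lambda_convex F lamt ->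
  let G := fun x => VT (V x) in
  let dist := Gdist ip G in
  let lam := if 0 < lamt
             then lamt / (opnorm (fun x : H => `|x|) (@L2norm _ _ _ mu) V) ^+ 2
             else lamt * (opnorm (@L2norm _ _ _ mu) (fun x : H => `|x|) Vinv) ^+ 2 in
  geod_lambda_convex dist F lam.
Proof.
move=> hip _ [C hC] hae hVV hVae [C' hC'] hadj hconv G dist lam.
have [ips ipl ipn] := hip.
have hipb : symbil ip by split.
pose q := fun x y => ip (G x) y.
have qL : forall x y, q x y = L2inner (V x) (V y) by move=> x y; rewrite /q /G hadj.
have hqb : symbil q.
  split; first by move=> x y; rewrite !qL L2inner_sym.
  move=> a x y z.
  have qs : forall x y, q x y = q y x by move=> x' y'; rewrite !qL L2inner_sym.
  by rewrite (qs _ z) (qs x z) (qs y z) /q bDr // bZr.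
have qn : forall x, q x x = L2norm (V x) ^+ 2 by move=> x; rewrite qL L2inner_sq.
have qpos : forall x, 0 <= q x x by move=> x; rewrite qn sqr_ge0.
have ipcs : forall a w, `|ip a w| <= `|a| * `|w|.
  move=> a w; have := @b_cs R H ip hipb (fun x => ltac:(rewrite ipn; exact: sqr_ge0)) a w.
  rewrite !ipn => h.
  have h0 : 0 <= `|a| * `|w| by rewrite mulr_ge0.
  by rewrite -(ler_pXn2r (n := 2)) ?nnegrE ?normr_ge0 // real_normK ?num_real // exprMn.
have cq : forall x, continuous (q x).
  move=> x; apply: (@lip_cont R H (q x) `|G x|) => a1 b1.
  by rewrite /q -bBr //; exact: ipcs.
have hlip : forall a b, `|L2norm (V a) - L2norm (V b)| <= C * `|a - b|.
  move=> a b; rewrite ler_norml.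
  have h1 := @L2normD _ _ _ mu (V (b - a)) (V a); rewrite -linearD subrK in h1.
  have h2 := @L2normD _ _ _ mu (V (a - b)) (V b); rewrite -linearD subrK in h2.
  have h3 := hC (b - a); have h4 := hC (a - b); rewrite distrC in h3.
  apply/andP; split; lra.
have cqq : continuous (fun z => q z z).
  move=> x; have hc := @lip_cont R H (fun z => L2norm (V z)) C hlip x.
  have -> : (fun z => q z z) = (fun z => L2norm (V z) * L2norm (V z)).
    by apply/funext => z; rewrite qn expr2.
  exact: (cvgM hc hc).
have qinj : forall x, q x x = 0 -> x = 0.
  move=> x; rewrite qn => /eqP; rewrite sqrf_eq0 => /eqP h0.
  have := hC' (V x); rewrite hVV h0 mulr0 normr_le0 => /eqP //.
have hdist2 : forall x y, dist x y ^+ 2 = q (y - x) (y - x).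
  move=> x y; by rewrite /dist (@Gdist_eq R H ip G x y hqb qpos cq cqq) sqr_sqrtr //; exact: qpos.
have hN : forall u, L2norm (V u) <= opnorm (fun x : H => `|x|) (@L2norm _ _ _ mu) V * `|u|.
  move=> u; have [->|u0] := eqVneq u 0.
    by rewrite normr0 mulr0; have := hC 0; rewrite normr0 mulr0.
  have nu : 0 < `|u| by rewrite normr_gt0.
  have hv : `|(`|u|^-1 *: u)| <= 1.
    by rewrite normrZ ger0_norm ?invr_ge0 ?normr_ge0 // mulVf ?gt_eqF.
  pose S := [set L2norm (V x) | x in [set x : H | `|x| <= 1]].
  have hub : has_ubound S.
    exists `|C| => y0 [x0 /= hx <-]; apply: (le_trans (hC x0)).
    apply: (le_trans (ler_wpM2r (normr_ge0 x0) (ler_norm C))).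
    by rewrite -[X in _ <= X]mulr1 ler_wpM2l.
  have := @ub_le_sup R S hub (L2norm (V (`|u|^-1 *: u))) (ex_intro2 _ _ (`|u|^-1 *: u) hv erefl).
  rewrite linearZ L2normZ ger0_norm ?invr_ge0 ?normr_ge0 // => h.
  by rewrite /opnorm -ler_pdivrMr // mulrC.
have hN' : forall u, `|u| <= opnorm (@L2norm _ _ _ mu) (fun x : H => `|x|) Vinv * L2norm (V u).
  move=> u; have [h0|k0] := eqVneq (L2norm (V u)) 0.
    by rewrite h0 mulr0; have := hC' (V u); rewrite hVV h0 mulr0.
  have kp : 0 < L2norm (V u) by rewrite lt_def k0 L2norm_ge0.
  have hv : L2norm ((L2norm (V u))^-1 *: V u) <= 1.
    by rewrite L2normZ ger0_norm ?invr_ge0 ?L2norm_ge0 // mulVf.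
  pose S := [set `|Vinv f| | f in [set f : L2 mu | L2norm f <= 1]].
  have hub : has_ubound S.
    exists `|C'| => y0 [f0 /= hf <-]; apply: (le_trans (hC' f0)).
    apply: (le_trans (ler_wpM2r (@L2norm_ge0 _ _ _ mu f0) (ler_norm C'))).
    by rewrite -[X in _ <= X]mulr1 ler_wpM2l.
  have := @ub_le_sup R S hub _ (ex_intro2 _ _ ((L2norm (V u))^-1 *: V u) hv erefl).
  rewrite linearZ hVV normrZ ger0_norm ?invr_ge0 ?L2norm_ge0 // => h.
  by rewrite /opnorm -ler_pdivrMr // mulrC.
move=> g hgeo th hth.
have /andP[th0 th1] := hth.
have Ith : I01 th by [].
have e1 := hgeo 0 th (I01_0 R) Ith.
have e2 := hgeo th 1 Ith (I01_1 R).
set x0 := g 0 in e1 e2 *; set x1 := g 1 in e1 e2 *; set xt := g th in e1 e2 *.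
set D := dist x0 x1 in e1 e2 *.
have qa : q (xt - x0) (xt - x0) = th ^+ 2 * D ^+ 2.
  by rewrite -hdist2 e1 subr0 ger0_norm // exprMn.
have qb : q (x1 - xt) (x1 - xt) = (1 - th) ^+ 2 * D ^+ 2.
  by rewrite -hdist2 e2 ger0_norm ?subr_ge0 // exprMn.
have qc : q (x1 - x0) (x1 - x0) = D ^+ 2 by rewrite -hdist2.
have ab : x1 - x0 = 1 *: (xt - x0) + 1 *: (x1 - xt).
  by rewrite !scale1r [RHS]addrC subrKA.
have hqs : forall x y, q x y = q y x by case: hqb.
have hab : q (xt - x0) (x1 - xt) = (D ^+ 2 - th ^+ 2 * D ^+ 2 - (1 - th) ^+ 2 * D ^+ 2) / 2.
  move: qc; rewrite ab bsq2 // qa qb => h; lra.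
have hw : q (th *: (x1 - xt) + (-(1 - th)) *: (xt - x0))
            (th *: (x1 - xt) + (-(1 - th)) *: (xt - x0)) = 0.
  by rewrite bsq2 // qa qb hqs hab; field.
have hxt : xt = (1 - th) *: x0 + th *: x1.
  by apply/eqP; rewrite eq_sym -subr_eq0 -lin_id (qinj _ hw).
have hcv := hconv x0 x1 th hth; rewrite -hxt in hcv.
set c := th * (1 - th) / 2 in hcv *.
have c0 : 0 <= c by rewrite /c divr_ge0 // mulr_ge0 // subr_ge0.
set L := L2norm (V (x1 - x0)).
set n := `|x0 - x1| in hcv.
have hD : D ^+ 2 = L ^+ 2 by rewrite -qc qn.
have L0 : 0 <= L by exact: L2norm_ge0.
have n0 : 0 <= n by exact: normr_ge0.
have key : lam * D ^+ 2 <= lamt * n ^+ 2.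
  rewrite hD /lam; case: ifPn => hl.
    set N := opnorm _ _ _.
    have hLN : L <= N * n by rewrite /n distrC; exact: hN.
    have [N0|N0] := eqVneq N 0.
      rewrite N0 expr0n /= invr0 mulr0 mul0r; apply: mulr_ge0; last exact: sqr_ge0.
      exact: ltW.
    have hsq : L ^+ 2 <= (N * n) ^+ 2.
      by rewrite ler_sqr // ?nnegrE //; exact: le_trans hLN.
    apply: (le_trans (ler_wpM2l _ hsq)).
      by rewrite divr_ge0 ?sqr_ge0 // ltW.
    by rewrite exprMn mulrA divfK // expf_neq0.
  set N := opnorm _ _ _.
  have hnN : n <= N * L by rewrite /n distrC; exact: hN'.
  have hsq : n ^+ 2 <= (N * L) ^+ 2.
    by rewrite ler_sqr // ?nnegrE //; exact: le_trans hnN.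
  rewrite -mulrA -exprMn; rewrite -lerN2 -!mulNr; apply: ler_wpM2l => //.
  by rewrite oppr_ge0 leNgt.
have := ler_wpM2l c0 key.
move: hcv; set A := (1 - th) * F x0 + th * F x1 => hcv hk.
rewrite (mulrC lam) -mulrA; rewrite (mulrC lamt) -mulrA in hcv.
lra.
Qed.
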